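(* Fix $n\in\mathbb{N}$. Consider a random problem instance, i.e. a random variable whose value determines a target set $T\subseteq\mathbb{F}_2^n$ (with $\mathbb{F}_2=\{0,1\}$), assumed nonempty. For each instance let $C=\sum_{z\in T}|z\rangle\langle z|$, $X=\sum_{j=1}^n\sigma^x_j$, $|\beta,\gamma\rangle_1=e^{-i\beta X}e^{-i\gamma C}|+\rangle^{\otimes n}$ and $F_1(\beta,\gamma)=\langle\beta,\gamma|_1C|\beta,\gamma\rangle_1$. For $k\in T$ and $0\le d\le n$ let $\#_d(k)=|\{z\in T:d_H(z,k)=d\}|$ ($d_H$ the Hamming distance), $f_n(\beta,d)=(\cos\beta)^{n-d}(-i\sin\beta)^d$, and $$c_k(\beta,\gamma)=\sum_{d=0}^n\left(\#_d(k)(e^{-i\gamma}-1)+\binom{n}{d}\right)f_n(\beta,d).$$ For a function $g$ of $k$, write $\overline{g(k)}=\frac{1}{|T|}\sum_{k\in T}g(k)$ (an instance-dependent random variable). Define $$\tilde E(F_1(\beta,\gamma))=\frac{E(|T|)}{2^n}\,E\!\left(\overline{|c_k(\beta,\gamma)|^2}\right).$$ Then $$E\!\left(\overline{|c_k(\beta,\gamma)|^2}\right)=\sum_{d_1,d_2=0}^n w_{d_1,d_2}(\gamma)\,f_n(\beta,d_1)\,f_n(\beta,d_2)^*,$$ where $$\begin{aligned}w_{d_1,d_2}(\gamma)=\;&E\!\left(\overline{\#_{d_1}(k)\#_{d_2}(k)}\right)(e^{-i\gamma}-1)(e^{i\gamma}-1)+E\!\left(\overline{\#_{d_1}(k)}\right)(e^{-i\gamma}-1)\binom{n}{d_2}\\&+E\!\left(\overline{\#_{d_2}(k)}\right)(e^{i\gamma}-1)\binom{n}{d_1}+\binom{n}{d_1}\binom{n}{d_2},\end{aligned}$$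 and the approximation error satisfies $$\left|E(F_1(\beta,\gamma))-\tilde E(F_1(\beta,\gamma))\right|\le\sqrt{\operatorname{Var}(|T|)\,\operatorname{Var}\!\left(\overline{|c_k(\beta,\gamma)|^2}\right)}.$$
   Context: Expectations $E$, variances $\operatorname{Var}$ are taken over the random instance (hence over the random target set $T$). $|z\rangle$ denotes the computational basis state of $z\in\mathbb{F}_2^n$, $|+\rangle=(|0\rangle+|1\rangle)/\sqrt2$, $\sigma^x_j$ is Pauli-$X$ on qubit $j$, and ${}^*$ denotes complex conjugation. *)

(* Defs.v *)
From mathcomp Require Import all_boot all_order all_algebra.
From mathcomp.real_closed Require Import complex.
From mathcomp Require Import all_classical all_reals all_analysis.
Import Order.TTheory GRing.Theory Num.Theory.
Import numFieldNormedType.Exports.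

Set Implicit Arguments.
Unset Strict Implicit.
Unset Printing Implicit Defensive.

Local Open Scope ring_scope.

Section QAOA.
Variable R : realType.
Local Notation C := R[i].

Definition expi (t : R) : C := Complex (cos t) (sin t).

Definition expm_partial (m : nat) (A : 'M[C]_m) (N : nat) : 'M[C]_m :=
  \sum_(k < N) ((k`!)%:R)^-1 *: A ^+ k.

Definition expm (m : nat) (A : 'M[C]_m) : 'M[C]_m :=
  \matrix_(a, b) Complex (limn (fun N => complex.Re (expm_partial A N a b)))
                         (limn (fun N => complex.Im (expm_partial A N a b))).

Variable n : nat.

Definition bitstr := {ffun 'I_n -> bool}.

(* Computational basis index a < 2^n  <->  bit string (binary digits of a). *)
Definition bits (a : 'I_(2 ^ n)) : bitstr := [ffun j : 'I_n => odd (a %/ 2 ^ j)].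

Definition flip (j : 'I_n) (z : bitstr) : bitstr :=
  [ffun i => if i == j then ~~ z i else z i].

Definition sigma_x (j : 'I_n) : 'M[C]_(2 ^ n) :=
  \matrix_(a, b) (bits a == flip j (bits b))%:R.

Definition Xmix : 'M[C]_(2 ^ n) := \sum_(j < n) sigma_x j.

Definition Ccost (T : {set bitstr}) : 'M[C]_(2 ^ n) :=
  \matrix_(a, b) ((a == b) && (bits a \in T))%:R.

Definition plus_state : 'cV[C]_(2 ^ n) := \col_a ((sqrtC 2)^-1 ^+ n).

Definition psi1 (T : {set bitstr}) (beta gamma : R) : 'cV[C]_(2 ^ n) :=
  expm ((- 'i%C * beta%:C%C) *: Xmix) *m
  expm ((- 'i%C * gamma%:C%C) *: Ccost T) *m plus_state.

Definition F1 (T : {set bitstr}) (beta gamma : R) : C :=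
  ((map_mx conjc (psi1 T beta gamma))^T *m Ccost T *m psi1 T beta gamma) 0 0.

Definition hamming (z k : bitstr) : nat := #|[set j | z j != k j]|.

Definition cnt (T : {set bitstr}) (d : nat) (k : bitstr) : nat :=
  #|[set z in T | hamming z k == d]|.

Definition fn (beta : R) (d : nat) : C :=
  (cos beta)%:C%C ^+ (n - d) * (- 'i%C * (sin beta)%:C%C) ^+ d.

Definition ck (T : {set bitstr}) (beta gamma : R) (k : bitstr) : C :=
  \sum_(d < n.+1)
     (((cnt T d k)%:R * (expi (- gamma) - 1) + ('C(n, d))%:R) * fn beta d).

Definition kavg (T : {set bitstr}) (g : bitstr -> C) : C :=
  (#|T|%:R)^-1 * \sum_(k in T) g k.

(* A random instance is modelled by a finite probability space (Omega, P)
   and a map T : Omega -> {set bitstr}. *)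

Definition Ex (Omega : finType) (P : Omega -> R) (Y : Omega -> C) : C :=
  \sum_(w : Omega) (P w)%:C%C * Y w.

Definition Var (Omega : finType) (P : Omega -> R) (Y : Omega -> C) : C :=
  Ex P (fun w => (Y w - Ex P Y) ^+ 2).

Definition avg_ck2 (Omega : finType) (T : Omega -> {set bitstr}) (beta gamma : R)
  (w : Omega) : C :=
  kavg (T w) (fun k => `|ck (T w) beta gamma k| ^+ 2).

Definition EtildeF1 (Omega : finType) (P : Omega -> R) (T : Omega -> {set bitstr})
  (beta gamma : R) : C :=
  Ex P (fun w => (#|T w|)%:R) / (2 ^ n)%:R * Ex P (avg_ck2 T beta gamma).

Definition wcoef (Omega : finType) (P : Omega -> R) (T : Omega -> {set bitstr})
  (gamma : R) (d1 d2 : nat) : C :=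
  Ex P (fun w => kavg (T w) (fun k => ((cnt (T w) d1 k) * (cnt (T w) d2 k))%:R))
     * (expi (- gamma) - 1) * (expi gamma - 1)
  + Ex P (fun w => kavg (T w) (fun k => (cnt (T w) d1 k)%:R))
     * (expi (- gamma) - 1) * ('C(n, d2))%:R
  + Ex P (fun w => kavg (T w) (fun k => (cnt (T w) d2 k)%:R))
     * (expi gamma - 1) * ('C(n, d1))%:R
  + ('C(n, d1))%:R * ('C(n, d2))%:R.

End QAOA.

(* Main.v *)
Require Import Defs.
From mathcomp Require Import all_boot all_order all_algebra.
From mathcomp.real_closed Require Import complex.
From mathcomp Require Import all_classical all_reals all_analysis.
From mathcomp Require Import ring lra.
Import Order.TTheory GRing.Theory Num.Theory.
Import numFieldNormedType.Exports.
Local Open Scope ring_scope.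
Section A.
Variable R : realType.
Local Notation C := R[i].

Lemma iexpr_even (m : nat) : ('i%C : C) ^+ m.*2 = (-1) ^+ m.
Proof. by rewrite -mul2n exprM sqr_i. Qed.

Lemma i_mulC (x : R) : ('i%C : C) * x%:C%C = Complex 0 x.
Proof. by apply/eqP; rewrite eq_complex /= !mul0r mulr0 mul1r subr0 add0r !eqxx. Qed.

Lemma term_eq (t : R) (k : nat) :
  (k`!%:R : C)^-1 * ('i%C * t%:C%C) ^+ k = Complex (cos_coeff t k) (sin_coeff t k).
Proof.
rewrite /cos_coeff /sin_coeff /=.
rewrite exprMn -rmorphXn -(rmorph_nat (real_complex R)) -fmorphV.
have -> : ('i%C : C) ^+ k = if odd k then ((-1) ^+ k./2)%:C%C * 'i%C else ((-1) ^+ k./2)%:C%C.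
  rewrite -[in LHS](odd_double_half k); case: (odd k).
    by rewrite add1n exprS iexpr_even rmorphXn rmorphN rmorph1 mulrC.
  by rewrite add0n iexpr_even rmorphXn rmorphN rmorph1.
have hh : odd k -> k.-1./2 = k./2.
  move=> ok; have -> : k = (k./2).*2.+1 by rewrite -{1}(odd_double_half k) ok.
  by rewrite /= half_double uphalf_double.
rewrite -!exprnP.
case: (odd k) hh => /= hh; last first.
  rewrite -!rmorphM; apply/eqP; rewrite eq_complex /=; apply/andP; split; apply/eqP; ring.
rewrite hh //.
apply/eqP; rewrite eq_complex /=; apply/andP; split; apply/eqP; ring.
Qed.
End A.
Section B.
Variable R : realType.
Local Notation C := R[i].
Local Notation toC := (real_complex R).
Local Open Scope classical_set_scope.

Lemma partial_eq (t : R) N :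
  \sum_(k < N) (k`!%:R : C)^-1 * ('i%C * t%:C%C) ^+ k =
  Complex (series (cos_coeff t) N) (series (sin_coeff t) N).
Proof.
elim: N => [|N IH]; first by rewrite big_ord0 /series /= !big_geq.
by rewrite big_ord_recr /= IH term_eq !seriesSr.
Qed.

Lemma cvg_sum_fin (I : finType) (f : I -> nat -> R) (l : I -> R) :
  (forall i, f i N @[N --> \oo] --> l i) ->
  (\sum_i f i N) @[N --> \oo] --> \sum_i l i.
Proof.
move=> H; apply: (@cvg_big R I +%R 0 predT add_continuous) => //.
Qed.

Lemma cos_cvg (t : R) : series (cos_coeff t) N @[N --> \oo] --> cos t.
Proof. rewrite unlock; exact: is_cvg_series_cos_coeff. Qed.

Lemma sin_cvg (t : R) : series (sin_coeff t) N @[N --> \oo] --> sin t.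
Proof. rewrite unlock; exact: is_cvg_series_sin_coeff. Qed.

Lemma Re_sum (I : finType) (F : I -> C) : complex.Re (\sum_i F i) = \sum_i complex.Re (F i).
Proof. by apply: (big_morph _ (fun x y => _) (erefl _)) => -[a b] [c d]. Qed.
Lemma Im_sum (I : finType) (F : I -> C) : complex.Im (\sum_i F i) = \sum_i complex.Im (F i).
Proof. by apply: (big_morph _ (fun x y => _) (erefl _)) => -[a b] [c d]. Qed.
Lemma Re_rmul (u v : R) (z : C) : complex.Re (u%:C%C * z * v%:C%C) = u * complex.Re z * v.
Proof. case: z => x y /=; ring. Qed.
Lemma Im_rmul (u v : R) (z : C) : complex.Im (u%:C%C * z * v%:C%C) = u * complex.Im z * v.
Proof. case: z => x y /=; ring. Qed.
Lemma complex_split (z : C) : z = Complex (complex.Re z) (complex.Im z).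
Proof. by case: z. Qed.

Lemma ent m (U V : 'M[C]_m) d a b :
  (U *m diag_mx d *m V) a b = \sum_s U a s * d 0 s * V s b.
Proof. by rewrite mxE; apply: eq_bigr => s _; rewrite mul_mx_diag mxE. Qed.

Lemma expm_diag m (U V : 'M[R]_m) (lam : 'I_m -> R) : V *m U = 1%:M ->
  expm (map_mx toC U *m diag_mx (\row_s ('i%C * (lam s)%:C%C)) *m map_mx toC V)
  = map_mx toC U *m diag_mx (\row_s expi (lam s)) *m map_mx toC V.
Proof.
move=> VU.
set U' := map_mx toC U; set V' := map_mx toC V.
have V'U' : V' *m U' = 1%:M by rewrite -map_mxM VU map_mx1.
have U'V' : U' *m V' = 1%:M by apply: mulmx1C.
have pw k : (U' *m diag_mx (\row_s ('i%C * (lam s)%:C%C)) *m V') ^+ k =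
    U' *m diag_mx (\row_s ('i%C * (lam s)%:C%C) ^+ k) *m V'.
  elim: k => [|k IH].
    have -> : (\row_s ('i%C * (lam s)%:C%C) ^+ 0) = const_mx 1.
      by apply/rowP => s; rewrite !mxE expr0.
    by rewrite expr0 diag_const_mx mulmx1 U'V'.
  rewrite exprSr IH -mulmxE !mulmxA -[_ *m V' *m U']mulmxA V'U' mulmx1.
  by rewrite -[_ *m diag_mx _ *m diag_mx _]mulmxA mulmx_diag; congr (_ *m diag_mx _ *m _);
    apply/rowP => s; rewrite !mxE exprSr.
apply/matrixP => a b.
have ep N : expm_partial (U' *m diag_mx (\row_s ('i%C * (lam s)%:C%C)) *m V') N a b =
   \sum_s (U a s)%:C%C * Complex (series (cos_coeff (lam s)) N) (series (sin_coeff (lam s)) N) * (V s b)%:C%C.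
  rewrite /expm_partial summxE.
  under eq_bigr do rewrite pw mxE ent mulr_sumr.
  rewrite exchange_big /=; apply: eq_bigr => s _.
  rewrite -partial_eq mulr_sumr mulr_suml; apply: eq_bigr => k _.
  by rewrite /U' /V' !mxE; ring.
have epR N : complex.Re (expm_partial (U' *m diag_mx (\row_s ('i%C * (lam s)%:C%C)) *m V') N a b) =
   \sum_s U a s * series (cos_coeff (lam s)) N * V s b.
  by rewrite ep Re_sum; apply: eq_bigr => s _; rewrite Re_rmul.
have epI N : complex.Im (expm_partial (U' *m diag_mx (\row_s ('i%C * (lam s)%:C%C)) *m V') N a b) =
   \sum_s U a s * series (sin_coeff (lam s)) N * V s b.
  by rewrite ep Im_sum; apply: eq_bigr => s _; rewrite Im_rmul.
rewrite mxE ent [RHS]complex_split Re_sum Im_sum; congr Complex.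
  under eq_fun do rewrite epR.
  apply: cvg_lim => //; apply: cvg_sum_fin => s.
  rewrite /U' /V' !mxE /=.
  have -> : (U a s * cos (lam s) - 0 * sin (lam s)) * V s b - (U a s * sin (lam s) + 0 * cos (lam s)) * 0 = U a s * cos (lam s) * V s b by ring.
  apply: cvgMr_tmp; apply: cvgMl_tmp; exact: cos_cvg.
under eq_fun do rewrite epI.
apply: cvg_lim => //; apply: cvg_sum_fin => s.
rewrite /U' /V' !mxE /=.
have -> : (U a s * cos (lam s) - 0 * sin (lam s)) * 0 + (U a s * sin (lam s) + 0 * cos (lam s)) * V s b = U a s * sin (lam s) * V s b by ring.
apply: cvgMr_tmp; apply: cvgMl_tmp; exact: sin_cvg.
Qed.
End B.
Lemma nat_bits {n a} : (a < 2 ^ n)%N -> a = (\sum_(j < n) odd (a %/ 2 ^ j) * 2 ^ j)%N.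
Proof.
elim: n a => [|n IH] a ha; first by case: a ha => // ?; rewrite big_ord0.
rewrite big_ord_recl /= expn0 divn1 muln1.
have h2 : (a %/ 2 < 2 ^ n)%N by rewrite ltn_divLR // -expnSr.
under eq_bigr => j _ do rewrite /bump /= add1n expnS divnMA mulnCA.
rewrite -big_distrr /= -IH // -[in LHS](odd_double_half a) divn2 -muln2 mulnC.
done.
Qed.

Section C.
Variable R : realType.
Local Notation C := R[i].
Local Notation toC := (real_complex R).
Variable n : nat.
Local Notation bs := (bitstr n).

Lemma bits_inj : injective (@bits n).
Proof.
move=> a b H; apply: val_inj => /=.
rewrite (nat_bits (ltn_ord a)) (nat_bits (ltn_ord b)).
apply: eq_bigr => j _; have := congr1 (fun f : bs => f j) H; rewrite !ffunE => -> //.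
Qed.

Lemma bits_bij : bijective (@bits n).
Proof.
apply: inj_card_bij; first exact: bits_inj.
by rewrite card_ffun card_bool !card_ord.
Qed.

Lemma sum_bits (V : nmodType) (F : bs -> V) :
  \sum_(a < 2 ^ n) F (bits a) = \sum_z F z.
Proof. by rewrite [RHS](reindex (@bits n)) //; exact: onW_bij bits_bij. Qed.

Definition sgn (b : bool) : R := if b then -1 else 1.
Definition chi (s z : bs) : R := \prod_(j < n) sgn (s j && z j).
Definition mu (s : bs) : R := \sum_(j < n) sgn (s j).

Lemma flipK j : involutive (@flip n j).
Proof.
by move=> z; apply/ffunP => i; rewrite !ffunE; case: eqP => // ->; rewrite negbK.
Qed.

Lemma chi_flip s z j : chi s (flip j z) = sgn (s j) * chi s z.
Proof.
rewrite /chi (bigD1 j) //= [in RHS](bigD1 j) //= mulrA; congr (_ * _).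
  by rewrite ffunE eqxx; case: (s j) (z j) => [] []; rewrite /sgn /= ?mulN1r ?opprK ?mul1r.
by apply: eq_bigr => i /negPf ne; rewrite ffunE ne.
Qed.

Lemma chi_orth s t : \sum_z chi s z * chi t z = if s == t then (2 ^ n)%:R else 0.
Proof.
under eq_bigr do rewrite -big_split /=.
rewrite -(bigA_distr_bigA (fun j (b : bool) => sgn (s j && b) * sgn (t j && b))) /=.
under eq_bigr do rewrite big_bool /= !andbT !andbF /= mulr1.
case: eqP => [<-|/eqP st].
  have h2 j : sgn (s j) * sgn (s j) + 1 = 2 :> R.
    by case: (s j); rewrite /sgn ?mulrNN mulr1.
  under eq_bigr do rewrite h2.
  by rewrite prodr_const card_ord natrX.
case: (pickP (fun j : 'I_n => s j != t j)) => [j hj | hall]; last first.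
  by case/eqP: st; apply/ffunP => j; apply/eqP; move/negbFE: (hall j).
have h0 : sgn (s j) * sgn (t j) + 1 = 0 :> R.
  by move: hj; rewrite /sgn; case: ifP => _; case: ifP => _ //= _; rewrite ?mulr1 ?mul1r addNr.
by rewrite (bigD1 j) //= h0 mul0r.
Qed.
End C.
Section D.
Variable R : realType.
Local Notation C := R[i].
Local Notation toC := (real_complex R).
Variable n : nat.
Local Notation bs := (bitstr n).
Local Notation N := (2 ^ n)%N.
Local Notation chi := (@chi R n).
Local Notation mu := (@mu R n).
Local Notation sgn := (@sgn R).

Definition Umx : 'M[R]_N := \matrix_(a, s) chi (bits s) (bits a).
Definition Vmx : 'M[R]_N := \matrix_(s, b) ((N%:R)^-1 * chi (bits s) (bits b)).

Lemma N_neq0 : (N%:R : R) != 0.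
Proof. by rewrite pnatr_eq0 -lt0n expn_gt0. Qed.

Lemma VU : Vmx *m Umx = 1%:M.
Proof.
apply/matrixP => s t; rewrite !mxE.
under eq_bigr do rewrite !mxE -mulrA.
rewrite -mulr_sumr (sum_bits _ _ (fun z => chi (bits s) z * chi (bits t) z)) chi_orth.
rewrite (inj_eq (@bits_inj n)); case: (s == t) => /=; last by rewrite mulr0.
by rewrite mulVf // N_neq0.
Qed.

Local Notation U' := (map_mx toC Umx).
Local Notation V' := (map_mx toC Vmx).

Lemma UV' : U' *m V' = 1%:M.
Proof. by apply: mulmx1C; rewrite -map_mxM VU map_mx1. Qed.

Lemma sum_flip (F : bs -> C) j z0 :
  \sum_z (z0 == flip j z)%:R * F z = F (flip j z0).
Proof.
rewrite (bigD1 (flip j z0)) //= flipK eqxx mul1r big1 ?addr0 // => z hz.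
case: eqP => [e|_]; last by rewrite mul0r.
by case/eqP: hz; rewrite e flipK.
Qed.

Lemma XU : Xmix R n *m U' = U' *m diag_mx (\row_s (mu (bits s))%:C%C).
Proof.
apply/matrixP => a s; rewrite mul_mx_diag !mxE.
under eq_bigr => b _ do rewrite /Xmix summxE !mxE mulr_suml.
rewrite exchange_big /=.
under eq_bigr => j _ do under eq_bigr => b _ do rewrite mxE.
under eq_bigr => j _ do rewrite (sum_bits _ _ (fun z => (bits a == flip j z)%:R * (chi (bits s) z)%:C%C)) sum_flip chi_flip.
by rewrite -rmorph_sum -rmorphM mulrC /mu mulr_suml.
Qed.

Lemma Xdecomp : Xmix R n = U' *m diag_mx (\row_s (mu (bits s))%:C%C) *m V'.
Proof. by rewrite -XU -mulmxA UV' mulmx1. Qed.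

Lemma expmX (beta : R) : expm ((- 'i%C * beta%:C%C) *: Xmix R n) =
  U' *m diag_mx (\row_s expi (- (beta * mu (bits s)))) *m V'.
Proof.
rewrite -expm_diag; last exact: VU.
congr expm; rewrite Xdecomp; apply/matrixP => a b.
rewrite mxE !ent mulr_sumr; apply: eq_bigr => s _; rewrite !mxE rmorphN rmorphM /=; ring.
Qed.
End D.

Lemma expiD (R : realType) (x y : R) : expi (x + y) = expi x * expi y.
Proof.
apply/eqP; rewrite eq_complex /= cosD sinD; apply/andP; split; apply/eqP; ring.
Qed.

Lemma expi0 (R : realType) : expi (0 : R) = 1.
Proof. by rewrite /expi cos0 sin0. Qed.

Section E.
Variable R : realType.
Local Notation C := R[i].
Local Notation toC := (real_complex R).
Variable n : nat.
Local Notation bs := (bitstr n).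
Local Notation N := (2 ^ n)%N.
Local Notation chi := (@chi R n).
Local Notation mu := (@mu R n).
Local Notation sgn := (@sgn R).

Lemma expi_sum (I : finType) (f : I -> R) : expi (\sum_i f i) = \prod_i expi (f i).
Proof. exact: (big_morph _ (@expiD R) (@expi0 R)). Qed.

Lemma prod_fn (beta : R) (x y : bs) :
  \prod_(j < n) (if x j != y j then - 'i%C * (sin beta)%:C%C else (cos beta)%:C%C)
  = fn n beta (hamming x y).
Proof.
rewrite (bigID (fun j => x j != y j)) /=.
under eq_bigr => j hj do rewrite hj.
under [X in _ * X]eq_bigr => j hj do rewrite (negbTE hj).
rewrite (eq_bigl (fun j => j \in [set j | x j != y j])); last by move=> j; rewrite inE.
rewrite [X in _ * X](eq_bigl (fun j => j \in ~: [set j | x j != y j])); last by move=> j; rewrite !inE.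
rewrite !prodr_const /fn /hamming mulrC; congr (_ * _).
have hc := cardsC [set j | x j != y j]; rewrite card_ord in hc.
move: hc; set k := #|[set j | x j != y j]|; set k' := #|~: _|; move=> hc.
have e : (n - k = k')%N by rewrite -[n in (n - _)%N]hc addKn.
by rewrite e.
Qed.

Lemma expmX_entry (beta : R) a b :
  (map_mx toC (Umx R n) *m diag_mx (\row_s expi (- (beta * mu (bits s)))) *m map_mx toC (Vmx R n)) a b
  = fn n beta (hamming (bits a) (bits b)).
Proof.
rewrite ent.
under eq_bigr => s _ do rewrite !mxE.
set x := bits a; set y := bits b.
rewrite (sum_bits _ _ (fun z => toC (chi z x) * expi (- (beta * mu z)) * toC ((N%:R)^-1 * chi z y))).
pose G j (c : bool) := toC (sgn (c && x j) * sgn (c && y j)) * expi (- (beta * sgn c)).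
have step z : toC (chi z x) * expi (- (beta * mu z)) * toC ((N%:R)^-1 * chi z y) =
    toC ((N%:R)^-1) * \prod_j G j (z j).
  rewrite /chi /mu mulr_sumr -sumrN expi_sum rmorphM !rmorph_prod /G.
  under [in RHS]eq_bigr do rewrite rmorphM.
  rewrite !big_split /=; ring.
under eq_bigr do rewrite step.
rewrite -mulr_sumr -(bigA_distr_bigA G) /=.
have -> : toC ((N%:R)^-1) = \prod_(j < n) toC (2%:R^-1).
  by rewrite prodr_const card_ord -rmorphXn exprVn -natrX.
rewrite -big_split /= -prod_fn; apply: eq_bigr => j _.
rewrite big_bool /G /sgn /=.
case: (x j); case: (y j) => /=;
  rewrite ?mulrN1 ?opprK ?mulr1 /expi; apply/eqP; rewrite eq_complex /= ?cosN ?sinN;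
  apply/andP; split; apply/eqP; field.
all: by [].
Qed.
End E.
Section F.
Variable R : realType.
Local Notation C := R[i].
Local Notation toC := (real_complex R).
Variable n : nat.
Local Notation bs := (bitstr n).
Local Notation N := (2 ^ n)%N.

Lemma Ccost_diag (T : {set bs}) : Ccost R T = diag_mx (\row_a ((bits a \in T)%:R : C)).
Proof.
apply/matrixP => a b; rewrite !mxE.
by case: (a == b) => /=; rewrite ?mulr1n ?mulr0n.
Qed.

Lemma expmC (T : {set bs}) (gamma : R) :
  expm ((- 'i%C * gamma%:C%C) *: Ccost R T) = diag_mx (\row_a expi (- (gamma * (bits a \in T)%:R))).
Proof.
have e : (- 'i%C * gamma%:C%C) *: Ccost R T = map_mx toC 1%:M *m
    diag_mx (\row_a ('i%C * (- (gamma * (bits a \in T)%:R))%:C%C)) *m map_mx toC 1%:M.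
  rewrite map_mx1 mul1mx mulmx1 Ccost_diag; apply/matrixP => a b; rewrite !mxE.
  case: eqP => [->|_]; last by rewrite !mulr0n mulr0.
  by rewrite !mulr1n rmorphN rmorphM rmorph_nat /=; ring.
by rewrite e expm_diag ?mul1mx ?mulmx1 // map_mx1 mul1mx mulmx1.
Qed.

Lemma hamming_sym (x y : bs) : hamming x y = hamming y x.
Proof. by rewrite /hamming; apply: eq_card => j; rewrite !inE eq_sym. Qed.

Lemma hamming_le (x y : bs) : (hamming x y < n.+1)%N.
Proof. by rewrite ltnS /hamming; apply: leq_trans (max_card _) _; rewrite card_ord. Qed.

Lemma card_sum (A : {set bs}) : (#|A|%:R : C) = \sum_z (z \in A)%:R.
Proof.
rewrite (eq_bigr (fun z => if z \in A then (1 : C) else 0)); last by move=> z _; case: (z \in A).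
by rewrite -big_mkcond sumr_const.
Qed.

Lemma card_ham (k : bs) d : #|[set z : bs | hamming z k == d]| = 'C(n, d).
Proof.
pose D (z : bs) := [set j | z j != k j].
pose E (S : {set 'I_n}) : bs := [ffun j => (j \in S) (+) k j].
have DE : cancel D E.
  by move=> z; apply/ffunP => j; rewrite ffunE inE; case: (z j); case: (k j).
have ED : cancel E D.
  by move=> S; apply/setP => j; rewrite inE ffunE; case: (j \in S); case: (k j).
have := card_draws 'I_n d; rewrite card_ord => <-.
rewrite -!sum1_card.
rewrite (reindex D) /=; last by apply: onW_bij; exists E.
by apply: eq_bigl => z; rewrite !inE.
Qed.

Lemma split_ham (g : nat -> C) (k z : bs) :
  g (hamming z k) = \sum_(d < n.+1) (hamming z k == d)%:R * g d.
Proof.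
rewrite (bigD1 (Ordinal (hamming_le z k))) //= eqxx mul1r big1 ?addr0 // => d hd.
case: eqP => [e|_]; last by rewrite mul0r.
by case/eqP: hd; apply: val_inj; rewrite /= e.
Qed.

Lemma ck_sum (T : {set bs}) (beta gamma : R) (k : bs) :
  \sum_z fn n beta (hamming k z) * expi (- (gamma * (z \in T)%:R)) = ck T beta gamma k.
Proof.
rewrite /ck.
under eq_bigr => z _ do rewrite hamming_sym (split_ham (fn n beta)) mulr_suml.
rewrite exchange_big /=; apply: eq_bigr => d _.
rewrite /cnt -(card_ham k d) !card_sum mulr_suml -big_split /= mulr_suml.
apply: eq_bigr => z _; rewrite !inE.
case: (z \in T); case: (hamming z k == d) => /=;
  rewrite ?mulr1 ?mulr0 ?oppr0 ?expi0 ?mul0r ?mul1r ?add0r ?addr0; ring.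
Qed.

End F.
Section G.
Variable R : realType.
Local Notation C := R[i].
Local Notation toC := (real_complex R).
Variable n : nat.
Local Notation bs := (bitstr n).
Local Notation N := (2 ^ n)%N.

Lemma psiE (T : {set bs}) (beta gamma : R) a :
  psi1 T beta gamma a 0 = (sqrtC 2)^-1 ^+ n * ck T beta gamma (bits a).
Proof.
rewrite /psi1 expmX expmC.
set M := (_ *m _ *m map_mx toC (Vmx R n)).
rewrite mxE; under eq_bigr => b _ do rewrite mul_mx_diag mxE.
under eq_bigr => b _ do rewrite /M expmX_entry !mxE.
rewrite -ck_sum -(sum_bits _ _ (fun z => fn n beta (hamming (bits a) z) * expi (- (gamma * (z \in T)%:R)))).
by rewrite mulr_sumr; apply: eq_bigr => b _; rewrite mulrC.
Qed.

Lemma pp : conjc ((sqrtC 2)^-1 ^+ n) * ((sqrtC 2)^-1 ^+ n) = (N%:R : C)^-1.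
Proof.
have hr : ((sqrtC 2)^-1 ^+ n : C) \is Num.real.
  by apply: ger0_real; rewrite exprn_ge0 // invr_ge0 sqrtC_ge0 ler0n.
have cj : conjc ((sqrtC 2)^-1 ^+ n : C) = (sqrtC 2)^-1 ^+ n := conj_Creal hr.
by rewrite cj -exprMn -invfM -expr2 sqrtCK exprVn natrX.
Qed.

Lemma F1E (T : {set bs}) (beta gamma : R) :
  F1 T beta gamma = (N%:R)^-1 * \sum_(k in T) `|ck T beta gamma k| ^+ 2.
Proof.
rewrite /F1 Ccost_diag.
have := psiE T beta gamma; move: (psi1 T beta gamma) => P hP.
rewrite mxE; under eq_bigr => b _ do rewrite mul_mx_diag !mxE hP.
set p := (sqrtC 2)^-1 ^+ n.
rewrite (sum_bits _ _ (fun z => conjc (p * ck T beta gamma z) * (z \in T)%:R * (p * ck T beta gamma z))).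
rewrite mulr_sumr [RHS]big_mkcond /=; apply: eq_bigr => z _.
case: (z \in T); last by rewrite mulr0 mul0r.
by rewrite -pp rmorphM sqr_normc mulr1 /p; ring.
Qed.
End G.
Section H.
Variable R : realType.
Local Notation C := R[i].
Local Notation toC := (real_complex R).
Variable n : nat.
Local Notation bs := (bitstr n).
Local Notation N := (2 ^ n)%N.
Variable Omega : finType.
Variable P : Omega -> R.
Hypothesis P_sum1 : \sum_(w : Omega) P w = 1.

Lemma ExD (Y Z : Omega -> C) : Ex P (fun w => Y w + Z w) = Ex P Y + Ex P Z.
Proof. by rewrite /Ex -big_split; apply: eq_bigr => w _; rewrite mulrDr. Qed.
Lemma Ex_mulr (Y : Omega -> C) c : Ex P (fun w => Y w * c) = Ex P Y * c.
Proof. by rewrite /Ex mulr_suml; apply: eq_bigr => w _; rewrite mulrA. Qed.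
Lemma Ex_mull (Y : Omega -> C) c : Ex P (fun w => c * Y w) = c * Ex P Y.
Proof. by rewrite /Ex mulr_sumr; apply: eq_bigr => w _; rewrite mulrCA. Qed.
Lemma Ex_cst c : Ex P (fun _ => c) = c.
Proof. by rewrite /Ex -mulr_suml -rmorph_sum P_sum1 rmorph1 mul1r. Qed.
Lemma Ex_sum (I : finType) (F : I -> Omega -> C) :
  Ex P (fun w => \sum_i F i w) = \sum_i Ex P (F i).
Proof.
rewrite /Ex exchange_big /=; apply: eq_bigr => w _; by rewrite mulr_sumr.
Qed.
Lemma ExB (Y Z : Omega -> C) : Ex P (fun w => Y w - Z w) = Ex P Y - Ex P Z.
Proof.
rewrite /Ex -sumrB; apply: eq_bigr => w _; by rewrite mulrBr.
Qed.

Lemma kavgD (A : {set bs}) (f g : bs -> C) :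
  kavg A (fun k => f k + g k) = kavg A f + kavg A g.
Proof. by rewrite /kavg big_split mulrDr. Qed.
Lemma kavg_mulr (A : {set bs}) (f : bs -> C) c : kavg A (fun k => f k * c) = kavg A f * c.
Proof. by rewrite /kavg -mulr_suml mulrA. Qed.
Lemma kavg_sum (A : {set bs}) (I : finType) (F : I -> bs -> C) :
  kavg A (fun k => \sum_i F i k) = \sum_i kavg A (F i).
Proof. by rewrite /kavg exchange_big mulr_sumr. Qed.
Lemma kavg_cst (A : {set bs}) (c : C) : A != finset.set0 -> kavg A (fun _ => c) = c.
Proof.
move=> hA; have h0 : (#|A|%:R : C) != 0 by rewrite pnatr_eq0 -lt0n card_gt0.
rewrite /kavg sumr_const -mulr_natr; field.
by rewrite h0.
Qed.

Lemma conj_expi (t : R) : conjc (expi (- t)) = expi t.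
Proof. by apply/eqP; rewrite eq_complex /= cosN sinN opprK !eqxx. Qed.

Lemma conjcM' (x y : C) : conjc (x * y) = conjc x * conjc y.
Proof. exact: rmorphM. Qed.
Lemma conjc_sum' (I : finType) (F : I -> C) : conjc (\sum_i F i) = \sum_i conjc (F i).
Proof. exact: rmorph_sum. Qed.

Lemma conjA (c m : nat) (gamma : R) :
  conjc (c%:R * (expi (- gamma) - 1) + m%:R) = c%:R * (expi gamma - 1) + m%:R.
Proof.
rewrite rmorphD rmorphM rmorphB !rmorph_nat rmorph1; congr (_ * (_ - _) + _).
exact: conj_expi.
Qed.

Lemma ck_sqr (T : {set bs}) (beta gamma : R) k :
  `|ck T beta gamma k| ^+ 2 =
  \sum_(d1 < n.+1) \sum_(d2 < n.+1)
    (((cnt T d1 k)%:R * (expi (- gamma) - 1) + ('C(n, d1))%:R) *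
     ((cnt T d2 k)%:R * (expi gamma - 1) + ('C(n, d2))%:R)) *
    (fn n beta d1 * conjc (fn n beta d2)).
Proof.
rewrite sqr_normc /ck conjc_sum' mulr_suml; apply: eq_bigr => d1 _.
rewrite mulr_sumr; apply: eq_bigr => d2 _.
rewrite conjcM' conjA; ring.
Qed.

Lemma part1 (T : Omega -> {set bs}) (T_nonempty : forall w, T w != finset.set0) (beta gamma : R) :
  Ex P (avg_ck2 T beta gamma) =
    \sum_(d1 < n.+1) \sum_(d2 < n.+1)
       wcoef P T gamma d1 d2 * fn n beta d1 * conjc (fn n beta d2).
Proof.
pose e := expi (- gamma); pose e' := expi gamma.
pose K w (d1 d2 : 'I_n.+1) := kavg (T w) (fun k =>
    ((cnt (T w) d1 k)%:R * (e - 1) + ('C(n, d1))%:R) *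
    ((cnt (T w) d2 k)%:R * (e' - 1) + ('C(n, d2))%:R)).
have pw : avg_ck2 T beta gamma = fun w =>
    \sum_(d1 < n.+1) \sum_(d2 < n.+1) K w d1 d2 * (fn n beta d1 * conjc (fn n beta d2)).
  apply: funext => w; rewrite /avg_ck2.
  transitivity (kavg (T w) (fun k => \sum_(d1 < n.+1) \sum_(d2 < n.+1)
    (((cnt (T w) d1 k)%:R * (e - 1) + ('C(n, d1))%:R) *
     ((cnt (T w) d2 k)%:R * (e' - 1) + ('C(n, d2))%:R)) *
    (fn n beta d1 * conjc (fn n beta d2)))).
    by congr kavg; apply: funext => k; rewrite ck_sqr.
  rewrite kavg_sum; apply: eq_bigr => d1 _; rewrite kavg_sum; apply: eq_bigr => d2 _.
  by rewrite kavg_mulr.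
rewrite pw Ex_sum; apply: eq_bigr => d1 _; rewrite Ex_sum; apply: eq_bigr => d2 _.
rewrite Ex_mulr mulrA; congr (_ * _ * _).
have kw : (fun w => K w d1 d2) = fun w =>
    kavg (T w) (fun k => ((cnt (T w) d1 k) * (cnt (T w) d2 k))%:R) * (e - 1) * (e' - 1)
  + kavg (T w) (fun k => (cnt (T w) d1 k)%:R) * (e - 1) * ('C(n, d2))%:R
  + kavg (T w) (fun k => (cnt (T w) d2 k)%:R) * (e' - 1) * ('C(n, d1))%:R
  + ('C(n, d1))%:R * ('C(n, d2))%:R.
  apply: funext => w; rewrite /K.
  transitivity (kavg (T w) (fun k =>
      ((cnt (T w) d1 k) * (cnt (T w) d2 k))%:R * ((e - 1) * (e' - 1))
    + (cnt (T w) d1 k)%:R * ((e - 1) * ('C(n, d2))%:R)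
    + (cnt (T w) d2 k)%:R * ((e' - 1) * ('C(n, d1))%:R)
    + ('C(n, d1))%:R * ('C(n, d2))%:R)).
    by congr kavg; apply: funext => k; rewrite natrM; ring.
  by rewrite !kavgD !kavg_mulr kavg_cst // !mulrA.
by rewrite kw !ExD !Ex_mulr Ex_cst /wcoef.
Qed.

End H.
Section I.
Variable R : realType.
Local Notation C := R[i].
Local Notation toC := (real_complex R).
Variable Omega : finType.
Variable P : Omega -> R.
Hypothesis P_ge0 : forall w, 0 <= P w.
Hypothesis P_sum1 : \sum_(w : Omega) P w = 1.

Lemma Preal w : ((P w)%:C%C : C) \is Num.real.
Proof. by apply: ger0_real; rewrite ler0c. Qed.

Lemma Ex_real (Y : Omega -> C) : (forall w, Y w \is Num.real) -> Ex P Y \is Num.real.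
Proof. by move=> hY; apply: rpred_sum => w _; rewrite rpredM ?Preal. Qed.

Lemma fac (f g : Omega -> C) : \sum_w \sum_v f w * g v = (\sum_w f w) * (\sum_v g v).
Proof. by rewrite mulr_suml; apply: eq_bigr => w _; rewrite mulr_sumr. Qed.

Lemma CS (A B : Omega -> C) :
  (forall w, A w \is Num.real) -> (forall w, B w \is Num.real) ->
  `|Ex P (fun w => A w * B w)| <= sqrtC (Ex P (fun w => A w ^+ 2) * Ex P (fun w => B w ^+ 2)).
Proof.
move=> hA hB.
set sab := Ex P _; set saa := Ex P _; set sbb := Ex P _.
have rab : sab \is Num.real by apply: Ex_real => w; rewrite rpredM.
have lag : \sum_w \sum_v (P w)%:C%C * (P v)%:C%C * (A w * B v - A v * B w) ^+ 2
    = 2 * (saa * sbb - sab ^+ 2).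
  transitivity (\sum_w \sum_v (((P w)%:C%C * A w ^+ 2) * ((P v)%:C%C * B v ^+ 2)
      + ((P w)%:C%C * B w ^+ 2) * ((P v)%:C%C * A v ^+ 2)
      - (((P w)%:C%C * (A w * B w)) * ((P v)%:C%C * (A v * B v))
         + ((P w)%:C%C * (A w * B w)) * ((P v)%:C%C * (A v * B v))))).
    by apply: eq_bigr => w _; apply: eq_bigr => v _; ring.
  under eq_bigr => w _ do rewrite sumrB !big_split /=.
  rewrite sumrB !big_split /= !fac /saa /sbb /sab /Ex; ring.
have ge0 : 0 <= \sum_w \sum_v (P w)%:C%C * (P v)%:C%C * (A w * B v - A v * B w) ^+ 2.
  apply: sumr_ge0 => w _; apply: sumr_ge0 => v _.
  apply: mulr_ge0; first by rewrite mulr_ge0 // ler0c.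
  by rewrite -realEsqr rpredB ?rpredM.
have le : sab ^+ 2 <= saa * sbb.
  by rewrite -subr_ge0 -(pmulr_rge0 _ (ltr0n _ 2)) -lag.
have h1 : sab ^+ 2 \is Num.nneg by rewrite nnegrE -realEsqr.
have h2 : saa * sbb \is Num.nneg by rewrite nnegrE (le_trans _ le) // -realEsqr.
by rewrite -(sqrCK (normr_ge0 sab)) real_normK // ler_sqrtC.
Qed.

Lemma cov (X Y : Omega -> C) :
  Ex P (fun w => (X w - Ex P X) * (Y w - Ex P Y)) = Ex P (fun w => X w * Y w) - Ex P X * Ex P Y.
Proof.
have -> : (fun w => (X w - Ex P X) * (Y w - Ex P Y)) =
   fun w => X w * Y w - (X w * Ex P Y + (Ex P X * Y w - Ex P X * Ex P Y)).
  by apply: funext => w; ring.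
rewrite ExB ExD ExB Ex_mulr Ex_mull Ex_cst //; ring.
Qed.
End I.
Theorem theorem1 (R : realType) (n : nat) (Omega : finType) (P : Omega -> R)
  (T : Omega -> {set {ffun 'I_n -> bool}})
  (P_ge0 : forall w, 0 <= P w) (P_sum1 : \sum_(w : Omega) P w = 1)
  (T_nonempty : forall w, T w != finset.set0) (beta gamma : R) :
  Ex P (avg_ck2 T beta gamma) =
    \sum_(d1 < n.+1) \sum_(d2 < n.+1)
       wcoef P T gamma d1 d2 * fn n beta d1 * conjc (fn n beta d2)
  /\
  `| Ex P (fun w => F1 (T w) beta gamma) - EtildeF1 P T beta gamma |
    <= sqrtC (Var P (fun w => (#|T w|)%:R) * Var P (avg_ck2 T beta gamma)).
Proof.
split; first exact: (@part1 R n Omega P P_sum1 T T_nonempty beta gamma).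
set X := (fun w => (#|T w|)%:R : R[i]).
set Y := avg_ck2 T beta gamma.
have XY0 w : X w != 0 by rewrite /X pnatr_eq0 -lt0n card_gt0.
have hF : (fun w => F1 (T w) beta gamma) = fun w => ((2 ^ n)%:R)^-1 * (X w * Y w).
  apply: funext => w; rewrite F1E /Y /avg_ck2 /kavg; congr (_ * _).
  by rewrite mulrA mulfV ?mul1r // -/(X w).
rewrite hF Ex_mull /EtildeF1.
have -> : ((2 ^ n)%:R)^-1 * Ex P (fun w => X w * Y w) - Ex P X / (2 ^ n)%:R * Ex P Y
    = ((2 ^ n)%:R)^-1 * (Ex P (fun w => X w * Y w) - Ex P X * Ex P Y) by ring.
rewrite -cov // normrM ger0_norm ?invr_ge0 ?ler0n //.
have Yr w : Y w \is Num.real.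
  by rewrite /Y /avg_ck2 /kavg rpredM ?rpredV ?realn // rpred_sum // => k _; rewrite rpredX ?normr_real.
have Xr w : X w \is Num.real by rewrite /X realn.
have Exr := @Ex_real R Omega P P_ge0.
apply: le_trans (@CS R Omega P P_ge0 _ _ _ _); last 2 first.
- by move=> w; rewrite rpredB ?Xr ?Exr.
- by move=> w; rewrite rpredB ?Yr ?Exr.
apply: ler_piMl; first exact: normr_ge0.
by rewrite invf_le1 ?ltr0n ?expn_gt0 // ler1n expn_gt0.
Qed.
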